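(* Let $n,m\ge1$, $V_{th}>0$, $\mathbf{W}\in\mathbb{R}^{n\times n}$, $\mathbf{F}\in\mathbb{R}^{n\times m}$, $\mathbf{b}\in\mathbb{R}^n$, and let $(\mathbf{x}[t])_{t\ge0}$ be inputs in $\mathbb{R}^m$. Consider the discrete feedback spiking neural network with the integrate-and-fire model: $\mathbf{u}[0]=\mathbf{0}$, $\mathbf{s}[0]=\mathbf{0}$, and for $t\ge0$ $$\mathbf{u}[t+\tfrac12]=\mathbf{u}[t]+\mathbf{W}\mathbf{s}[t]+\mathbf{F}\mathbf{x}[t]+\mathbf{b},\quad \mathbf{s}[t+1]=H(\mathbf{u}[t+\tfrac12]-V_{th}),\quad \mathbf{u}[t+1]=\mathbf{u}[t+\tfrac12]-V_{th}\mathbf{s}[t+1],$$ with $H$ the elementwise Heaviside step function. Define the average firing rates $\mathbf{a}[t]=\frac1t\sum_{\tau=1}^t\mathbf{s}[\tau]$ and the average inputs $\overline{\mathbf{x}}[t]=\frac{1}{t+1}\sum_{\tau=0}^t\mathbf{x}[\tau]$. Let $\mathbf{u}^+[t]\in\mathbb{R}^n$ denote the part of the membrane potential for which $$\mathbf{a}[t+1]=\sigma\!\left(\frac1{V_{th}}\left(\frac{t}{t+1}\mathbf{W}\mathbf{a}[t]+\mathbf{F}\overline{\mathbf{x}}[t]+\mathbf{b}-\frac{\mathbf{u}^+[t+1]}{t+1}\right)\right)$$ holds for all $t$. Suppose $\overline{\mathbf{x}}[t]\to\mathbf{x}^*$, and there exist constants $c$ and $\gamma<1$ such that $|\mathbf{u}^+_i[t]|\le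 c$ for all $i,t$ and $\|\mathbf{W}\|_2\le\gamma V_{th}$. Then $\mathbf{a}[t]$ converges to a point $\mathbf{a}^*$ satisfying $$\mathbf{a}^*=\sigma\!\left(\frac1{V_{th}}\left(\mathbf{W}\mathbf{a}^*+\mathbf{F}\mathbf{x}^*+\mathbf{b}\right)\right).$$
   Context: $\sigma$ is applied elementwise with $\sigma(x)=1$ for $x>1$, $\sigma(x)=x$ for $0\le x\le1$, $\sigma(x)=0$ for $x<0$. $\|\cdot\|_2$ is the spectral norm. In the paper $\mathbf{u}_i[t]=\mathbf{u}^-_i[t]+\mathbf{u}^+_i[t]$ where $\frac1t\mathbf{u}^-_i[t]=\min(\max(v_i[t]-V_{th},0),v_i[t])$ (with $v[t]$ the argument $\frac{t-1}{t}\mathbf{W}\mathbf{a}[t-1]+\mathbf{F}\overline{\mathbf{x}}[t-1]+\mathbf{b}$) collects the negative and excess positive terms, and $\mathbf{u}^+[t]$ is the remainder; with this decomposition the displayed relation holds. *)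

(* Defs.v *)
From HB Require Import structures.
From mathcomp Require Import all_boot all_order all_algebra.
From mathcomp Require Import all_classical all_reals all_analysis.
Set Implicit Arguments. Unset Strict Implicit. Unset Printing Implicit Defensive.
Import Order.TTheory GRing.Theory Num.Theory.
Import numFieldNormedType.Exports.
Local Open Scope classical_set_scope.
Local Open Scope ring_scope.

Section SNN.
Context {R : realType}.

Definition heaviside (y : R) : R := if 0 <= y then 1 else 0.

Definition sigma (y : R) : R := if y < 0 then 0 else if 1 < y then 1 else y.

Definition vnorm2 {k : nat} (v : 'cV[R]_k) : R := Num.sqrt (\sum_i v i 0 ^+ 2).

Definition spectral_norm {p q : nat} (A : 'M[R]_(p, q)) : R :=
  sup [set vnorm2 (A *m v) | v in [set v : 'cV[R]_q | vnorm2 v = 1]].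

Fixpoint snn_state {n m : nat} (W : 'M[R]_n) (F : 'M[R]_(n, m)) (b : 'cV[R]_n)
  (Vth : R) (x : nat -> 'cV[R]_m) (t : nat) : 'cV[R]_n * 'cV[R]_n :=
  match t with
  | 0%N => (0, 0)
  | t'.+1 =>
      let us := snn_state W F b Vth x t' in
      let uh := us.1 + W *m us.2 + F *m x t' + b in
      let s' := map_mx (fun y => heaviside (y - Vth)) uh in
      (uh - Vth *: s', s')
  end.

Definition spikes {n m : nat} W F b Vth x (t : nat) : 'cV[R]_n :=
  (@snn_state n m W F b Vth x t).2.

(* a[t] = 1/t sum_{tau=1}^t s[tau]  (a[0] = 0) *)
Definition rate {n m : nat} W F b Vth x (t : nat) : 'cV[R]_n :=
  (t%:R)^-1 *: \sum_(1 <= tau < t.+1) @spikes n m W F b Vth x tau.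

Definition avg_input {m : nat} (x : nat -> 'cV[R]_m) (t : nat) : 'cV[R]_m :=
  (t.+1%:R)^-1 *: \sum_(0 <= tau < t.+1) x tau.

End SNN.

(* Main.v *)
Require Import Defs.
From HB Require Import structures.
From mathcomp Require Import all_boot all_order all_algebra.
From mathcomp Require Import all_classical all_reals all_analysis.
From mathcomp Require Import ring lra.
Import Order.TTheory GRing.Theory Num.Theory.
Import numFieldNormedType.Exports.
Local Open Scope classical_set_scope.
Local Open Scope ring_scope.
Set Implicit Arguments. Unset Strict Implicit.

Section Helpers.
Variable R : realType.

Lemma sumsq_ge0 k (a : 'I_k -> R) : 0 <= \sum_i a i ^+ 2.
Proof. by apply: sumr_ge0 => i _; rewrite sqr_ge0. Qed.

Lemma vn_ge0 k (v : 'cV[R]_k) : 0 <= vnorm2 v.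
Proof. exact: sqrtr_ge0. Qed.

Lemma vn_sq k (v : 'cV[R]_k) : vnorm2 v ^+ 2 = \sum_i v i 0 ^+ 2.
Proof. by rewrite /vnorm2 sqr_sqrtr // sumsq_ge0. Qed.

Lemma vn_le k (v : 'cV[R]_k) r : 0 <= r -> \sum_i v i 0 ^+ 2 <= r ^+ 2 -> vnorm2 v <= r.
Proof.
move=> r0 h; rewrite /vnorm2 -[leRHS](ger0_norm r0) -sqrtr_sqr.
by rewrite ler_sqrt // sqr_ge0.
Qed.

Lemma vn_sq_le k (v : 'cV[R]_k) r : vnorm2 v <= r -> \sum_i v i 0 ^+ 2 <= r ^+ 2.
Proof.
move=> h; rewrite -vn_sq; have := vn_ge0 v; nra.
Qed.

Lemma entry_le k (v : 'cV[R]_k) i : `|v i 0| <= vnorm2 v.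
Proof.
rewrite -sqrtr_sqr /vnorm2 ler_sqrt ?sumsq_ge0 //.
rewrite (bigD1 i) //= lerDl; apply: sumr_ge0 => j _; exact: sqr_ge0.
Qed.

Lemma vn_entries k (v : 'cV[R]_k) d : 0 <= d -> (forall i, `|v i 0| <= d) ->
  vnorm2 v <= Num.sqrt k%:R * d.
Proof.
move=> d0 h; apply: vn_le; first by rewrite mulr_ge0 ?sqrtr_ge0.
rewrite exprMn sqr_sqrtr //.
have -> : k%:R * d ^+ 2 = \sum_(i < k) d ^+ 2 by rewrite sumr_const card_ord mulr_natl.
apply: ler_sum => i _; rewrite -real_normK ?num_real //.
by rewrite lerXn2r ?nnegrE ?normr_ge0.
Qed.

Lemma cs k (a b : 'I_k -> R) :
  \sum_i a i * b i <= Num.sqrt (\sum_i a i ^+ 2) * Num.sqrt (\sum_i b i ^+ 2).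
Proof.
set A := Num.sqrt _; set B := Num.sqrt _.
have A0 : 0 <= A by exact: sqrtr_ge0.
have B0 : 0 <= B by exact: sqrtr_ge0.
have hA : A ^+ 2 = \sum_i a i ^+ 2 by rewrite sqr_sqrtr // sumsq_ge0.
have hB : B ^+ 2 = \sum_i b i ^+ 2 by rewrite sqr_sqrtr // sumsq_ge0.
have [A0'|Apos] := eqVneq A 0.
  have ha : forall i, a i = 0.
    move=> i; apply/eqP; rewrite -normr_le0 -sqrtr_sqr -A0'.
    rewrite ler_sqrt ?sumsq_ge0 // (bigD1 i) //= lerDl.
    by apply: sumr_ge0 => j _; exact: sqr_ge0.
  rewrite big1 ?A0' ?mul0r // => i _; by rewrite ha mul0r.
have [B0'|Bpos] := eqVneq B 0.
  have hb : forall i, b i = 0.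
    move=> i; apply/eqP; rewrite -normr_le0 -sqrtr_sqr -B0'.
    rewrite ler_sqrt ?sumsq_ge0 // (bigD1 i) //= lerDl.
    by apply: sumr_ge0 => j _; exact: sqr_ge0.
  rewrite big1 ?B0' ?mulr0 // => i _; by rewrite hb mulr0.
have Ap : 0 < A by rewrite lt_def Apos A0.
have Bp : 0 < B by rewrite lt_def Bpos B0.
have key : 2 * A * B * (\sum_i a i * b i) <= B ^+ 2 * (A ^+ 2) + A ^+ 2 * (B ^+ 2).
  rewrite [in X in _ <= X + _]hA [in X in _ <= _ + X]hB !mulr_sumr -big_split /=.
  apply: ler_sum => i _; have := sqr_ge0 (B * a i - A * b i); nra.
have ABp : 0 < A * B by rewrite mulr_gt0.
nra.
Qed.


Lemma vn_add k (u v : 'cV[R]_k) : vnorm2 (u + v) <= vnorm2 u + vnorm2 v.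
Proof.
apply: vn_le; first by rewrite addr_ge0 ?vn_ge0.
have h := cs (fun i => u i 0) (fun i => v i 0).
have e : \sum_i (u + v) i 0 ^+ 2 =
   \sum_i u i 0 ^+ 2 + 2 * \sum_i (u i 0 * v i 0) + \sum_i v i 0 ^+ 2.
  rewrite mulr_sumr -!big_split /=; apply: eq_bigr => i _; rewrite !mxE; ring.
rewrite e -!vn_sq; move: h; rewrite /= -/(vnorm2 u) -/(vnorm2 v) => h.
nra.
Qed.

Lemma vn_scale k (c : R) (v : 'cV[R]_k) : vnorm2 (c *: v) = `|c| * vnorm2 v.
Proof.
rewrite /vnorm2 -sqrtr_sqr -sqrtrM ?sqr_ge0 //; congr Num.sqrt.
rewrite mulr_sumr; apply: eq_bigr => i _; rewrite !mxE; ring.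
Qed.

Lemma vn_opp k (v : 'cV[R]_k) : vnorm2 (- v) = vnorm2 v.
Proof. by rewrite -scaleN1r vn_scale normrN normr1 mul1r. Qed.

Definition frob p q (A : 'M[R]_(p, q)) := Num.sqrt (\sum_i \sum_j A i j ^+ 2).

Lemma frob_ge0 p q (A : 'M[R]_(p, q)) : 0 <= frob A.
Proof. exact: sqrtr_ge0. Qed.

Lemma vn_mul p q (A : 'M[R]_(p, q)) v : vnorm2 (A *m v) <= frob A * vnorm2 v.
Proof.
apply: vn_le; first by rewrite mulr_ge0 ?frob_ge0 ?vn_ge0.
rewrite exprMn vn_sq /frob sqr_sqrtr; last first.
  by apply: sumr_ge0 => i _; exact: sumsq_ge0.
rewrite mulr_suml; apply: ler_sum => i _; rewrite mxE.
have h1 := cs (fun j => A i j) (fun j => v j 0).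
have h2 := cs (fun j => - A i j) (fun j => v j 0).
move: h1 h2 => /=.
set S := \sum_j A i j * v j 0.
have -> : \sum_j - A i j * v j 0 = - S by rewrite -sumrN; apply: eq_bigr => j _; ring.
have -> : \sum_j (- A i j) ^+ 2 = \sum_j A i j ^+ 2 by apply: eq_bigr => j _; ring.
set P := Num.sqrt (\sum_j A i j ^+ 2); set Q := Num.sqrt (\sum_j v j 0 ^+ 2).
have eP : P ^+ 2 = \sum_j A i j ^+ 2 by rewrite sqr_sqrtr // sumsq_ge0.
have eQ : Q ^+ 2 = \sum_j v j 0 ^+ 2 by rewrite sqr_sqrtr // sumsq_ge0.
rewrite -eP -eQ => h1 h2.
have P0 : 0 <= P by exact: sqrtr_ge0.
have Q0 : 0 <= Q by exact: sqrtr_ge0.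
nra.
Qed.

Lemma sig01 (y : R) : 0 <= sigma y <= 1.
Proof.
rewrite /sigma; case: ifP => [_|/negbT]; first by rewrite lexx ler01.
rewrite -leNgt => y0; case: ifP => [_|/negbT]; first by rewrite ler01 lexx.
by rewrite -leNgt => y1; rewrite y0 y1.
Qed.

Lemma sig_sq (p q : R) : (sigma p - sigma q) ^+ 2 <= (p - q) ^+ 2.
Proof.
have : (0 <= sigma p - sigma q <= p - q) \/ (p - q <= sigma p - sigma q <= 0).
  rewrite /sigma.
  case: (ltrP p 0) => hp; case: (ltrP 1 p) => hp1;
  case: (ltrP q 0) => hq; case: (ltrP 1 q) => hq1;
  first [ left; apply/andP; split; lra | right; apply/andP; split; lra
        | case: (lerP q p) => ?; [left|right]; apply/andP; split; lra ].
case=> /andP[h1 h2]; nra.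
Qed.

Lemma vn_sig k (p q : 'cV[R]_k) :
  vnorm2 (map_mx sigma p - map_mx sigma q) <= vnorm2 (p - q).
Proof.
apply: vn_le; first exact: vn_ge0.
rewrite vn_sq; apply: ler_sum => i _; rewrite !mxE; exact: sig_sq.
Qed.

Lemma spec_bound n (W : 'M[R]_n) (v : 'cV[R]_n) : (0 < n)%N ->
  0 <= spectral_norm W /\ vnorm2 (W *m v) <= spectral_norm W * vnorm2 v.
Proof.
move=> n0.
set E := [set vnorm2 (W *m u) | u in [set u : 'cV[R]_n | vnorm2 u = 1]].
have ubE : has_ubound E.
  exists (frob W) => _ [u /= u1 <-].
  by have := vn_mul W u; rewrite u1 mulr1.
have supE := ub_le_sup ubE.
have S0 : 0 <= spectral_norm W.
  pose i0 : 'I_n := Ordinal n0.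
  pose e : 'cV[R]_n := \col_i (i == i0)%:R.
  have e1 : vnorm2 e = 1.
    rewrite /vnorm2 (bigD1 i0) //= big1 => [|i /negbTE hi]; last by rewrite mxE hi expr0n.
    by rewrite mxE eqxx expr1n addr0 sqrtr1.
  apply: le_trans (vn_ge0 (W *m e)) _; apply: supE; by exists e.
split => //.
have [v0|vpos] := eqVneq (vnorm2 v) 0.
  have := vn_mul W v; rewrite v0 mulr0 => h; rewrite mulr0.
  exact: le_trans h (lexx 0).
have vp : 0 < vnorm2 v by rewrite lt_def vpos vn_ge0.
have : E (vnorm2 (W *m ((vnorm2 v)^-1 *: v))).
  exists ((vnorm2 v)^-1 *: v) => //=.
  by rewrite vn_scale ger0_norm ?invr_ge0 ?vn_ge0 // mulVf.
move/supE; rewrite -scalemxAr vn_scale ger0_norm ?invr_ge0 ?vn_ge0 //.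
by rewrite ler_pdivrMl // mulrC.
Qed.


Lemma zid1 k (A B X Y : 'cV[R]_k) : A + X + Y - (B + X + Y) = A - B.
Proof. by apply/matrixP => i j; rewrite !mxE; ring. Qed.

Lemma zid2 k (c d : R) (A X Y B U : 'cV[R]_k) :
  (c *: A + X + B - d *: U) - (A + Y + B) = (c - 1) *: A + (X - Y) - d *: U.
Proof. by apply/matrixP => i j; rewrite !mxE; ring. Qed.

Lemma zid3 k (X Y FX FY : 'cV[R]_k) : X - Y = (X - FX) + (FX - FY) - (Y - FY).
Proof. by apply/matrixP => i j; rewrite !mxE; ring. Qed.

Lemma zid4 k (A FA X FX : 'cV[R]_k) : A - FA = - (X - A) + (X - FX) + (FX - FA).
Proof. by apply/matrixP => i j; rewrite !mxE; ring. Qed.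

Lemma vn_add3 k (X Y Z : 'cV[R]_k) : vnorm2 (X + Y - Z) <= vnorm2 X + vnorm2 Y + vnorm2 Z.
Proof.
apply: le_trans (vn_add _ _) _; rewrite vn_opp lerD2r; exact: vn_add.
Qed.

Lemma vn_add3' k (X Y Z : 'cV[R]_k) : vnorm2 (X + Y + Z) <= vnorm2 X + vnorm2 Y + vnorm2 Z.
Proof.
apply: le_trans (vn_add _ _) _; rewrite lerD2r; exact: vn_add.
Qed.

Lemma entry_mxnorm p q (M : 'M[R]_(p, q)) i j : `|M i j| <= `|M|.
Proof.
by rewrite [leRHS]/Num.Def.normr /= mx_normrE; apply/bigmax_geP; right => /=; exists (i, j).
Qed.

Lemma cvg_vn k (g : nat -> 'cV[R]_k) (l : 'cV[R]_k) : g @ \oo --> l ->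
  forall eps, 0 < eps -> exists N, forall t, (N <= t)%N -> vnorm2 (g t - l) <= eps.
Proof.
move=> /cvgrPdist_le h eps e0.
have s0 : 0 <= Num.sqrt (k%:R : R) by exact: sqrtr_ge0.
set e' := eps / (Num.sqrt k%:R + 1).
have e'0 : 0 < e' by rewrite divr_gt0 // ltr_pwDr.
have [N _ HN] := h e' e'0.
exists N => t /HN Ht.
apply: le_trans (vn_entries (ltW e'0) _) _.
  move=> i; apply: le_trans (entry_mxnorm _ i 0) _.
  by rewrite -normrN opprB.
rewrite /e' mulrA ler_pdivrMr ?ltr_pwDr //; nra.
Qed.

End Helpers.
Unset Implicit Arguments.

Theorem theorem2 (R : realType) (n m : nat) (Vth : R) (W : 'M[R]_n)
  (F : 'M[R]_(n, m)) (b : 'cV[R]_n) (x : nat -> 'cV[R]_m)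
  (uplus : nat -> 'cV[R]_n) (xstar : 'cV[R]_m) (c gamma : R) :
  (0 < n)%N -> (0 < m)%N -> 0 < Vth ->
  (forall t : nat,
     rate W F b Vth x t.+1 =
     map_mx sigma (Vth^-1 *: ((t%:R / t.+1%:R) *: (W *m rate W F b Vth x t)
                              + F *m avg_input x t + b
                              - (t.+1%:R)^-1 *: uplus t.+1))) ->
  avg_input x @ \oo --> xstar ->
  gamma < 1 ->
  (forall (i : 'I_n) (t : nat), `|uplus t i 0| <= c) ->
  spectral_norm W <= gamma * Vth ->
  exists astar : 'cV[R]_n,
    rate W F b Vth x @ \oo --> astar /\
    astar = map_mx sigma (Vth^-1 *: (W *m astar + F *m xstar + b)).
Proof.
move=> n0 m0 V0 hrec hx g1 hu hS.
set a := rate W F b Vth x in hrec *.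
pose f (y : 'cV[R]_n) := map_mx sigma (Vth^-1 *: (W *m y + F *m xstar + b)).
set S := spectral_norm W in hS.
have S0 : 0 <= S by exact: (spec_bound W 0 n0).1.
have Sb : forall v, vnorm2 (W *m v) <= S * vnorm2 v by move=> v; exact: (spec_bound W v n0).2.
have g0 : 0 <= gamma by nra.
have c0 : 0 <= c by exact: le_trans (normr_ge0 _) (hu (Ordinal n0) 0%N).
have Vi0 : 0 <= Vth^-1 by rewrite invr_ge0 ltW.
have contr : forall y z, vnorm2 (f y - f z) <= gamma * vnorm2 (y - z).
  move=> y z; apply: le_trans (vn_sig _ _) _.
  rewrite -scalerBr zid1 -mulmxBr vn_scale ger0_norm //.
  rewrite ler_pdivrMl //.
  have := Sb (y - z); have := vn_ge0 (y - z); nra.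
have ab : forall t i, 0 <= a t i 0 <= 1.
  case=> [|t] i.
    by rewrite /a /rate big_geq // scaler0 mxE lexx ler01.
  by rewrite hrec mxE; exact: sig01.
clearbody a.
set sn := Num.sqrt (n%:R : R).
have sn0 : 0 <= sn by exact: sqrtr_ge0.
have anorm : forall t, vnorm2 (a t) <= sn.
  move=> t; rewrite -[sn]mulr1; apply: vn_entries => // i.
  by have /andP[h1 h2] := ab t i; rewrite ger0_norm.
have abnd : forall t s, vnorm2 (a t - a s) <= sn.
  move=> t s; rewrite -[sn]mulr1; apply: vn_entries => // i; rewrite !mxE.
  have /andP[h1 h2] := ab t i; have /andP[h3 h4] := ab s i.
  by rewrite ler_norml; apply/andP; split; lra.
pose K := S * sn + sn * c.
have K0 : 0 <= K by rewrite addr_ge0 // mulr_ge0.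
have ebound : forall t, vnorm2 (a t.+1 - f (a t)) <=
    Vth^-1 * ((t.+1%:R)^-1 * K + frob F * vnorm2 (avg_input x t - xstar)).
  move=> t; rewrite hrec /f; apply: le_trans (vn_sig _ _) _.
  rewrite -scalerBr zid2 -mulmxBr vn_scale ger0_norm //.
  apply: ler_wpM2l => //.
  set d := (t.+1%:R)^-1.
  have T0 : (t.+1%:R : R) != 0 by rewrite pnatr_eq0.
  have hd1 : t.+1%:R * d = 1 by rewrite mulfV.
  have ht : t.+1%:R = t%:R + 1 :> R by rewrite -addn1 natrD.
  have d0 : 0 <= d by rewrite invr_ge0 ler0n.
  have hc : t%:R / t.+1%:R - 1 = - d.
    rewrite -/d; move: hd1; rewrite ht; nra.
  rewrite hc; apply: le_trans (vn_add3 _ _ _) _.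
  rewrite !vn_scale normrN ger0_norm //.
  have h1 : d * vnorm2 (W *m a t) <= d * (S * sn).
    apply: ler_wpM2l => //; apply: le_trans (Sb _) _; exact: ler_wpM2l.
  have h2 : d * vnorm2 (uplus t.+1) <= d * (sn * c).
    apply: ler_wpM2l => //; apply: vn_entries => // i; exact: hu.
  have h3 := vn_mul F (avg_input x t - xstar).
  rewrite /K; lra.
have err_small : forall eta, 0 < eta -> exists T, forall t, (T <= t)%N ->
    vnorm2 (a t.+1 - f (a t)) <= eta.
  move=> eta he.
  have fF0 := frob_ge0 F.
  set e1 := Vth * eta / (2 * (frob F + 1)).
  have e10 : 0 < e1 by rewrite /e1 divr_gt0 ?mulr_gt0 // ltr_pwDr.
  have he1 : (frob F + 1) * e1 = Vth * eta / 2.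
    have hf : frob F + 1 != 0 by rewrite gt_eqF // ltr_pwDr.
    rewrite /e1; field; rewrite ?hf //.
  have [N1 hN1] := cvg_vn hx e10.
  have VE : 0 < Vth * eta by rewrite mulr_gt0.
  have [N2 hN2] : exists N : nat, 2 * K < N%:R * (Vth * eta).
    exists (Num.Def.archi_bound (2 * K / (Vth * eta))).
    rewrite -ltr_pdivrMr //; apply: archi_boundP.
    by rewrite divr_ge0 ?mulr_ge0 // ltW.
  exists (N1 + N2)%N => t ht.
  apply: le_trans (ebound t) _.
  rewrite ler_pdivrMl //.
  have hx1 := hN1 t (leq_trans (leq_addr _ _) ht).
  have hx2 : frob F * vnorm2 (avg_input x t - xstar) <= frob F * e1 by exact: ler_wpM2l.
  set d := (t.+1%:R)^-1.
  have T0 : (t.+1%:R : R) != 0 by rewrite pnatr_eq0.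
  have hd1 : t.+1%:R * d = 1 by rewrite mulfV.
  have d0 : 0 <= d by rewrite invr_ge0 ler0n.
  have hN2t : (N2%:R : R) <= t.+1%:R.
    rewrite ler_nat; apply: leq_trans (leq_addl N1 N2) _; exact: leq_trans ht _.
  have hK : 2 * K <= t.+1%:R * (Vth * eta).
    apply: le_trans (ltW hN2) _; by rewrite ler_pM2r.
  have hK2 : d * (2 * K) <= d * (t.+1%:R * (Vth * eta)) by exact: ler_wpM2l.
  have {}hK2 : d * (2 * K) <= Vth * eta.
    by apply: le_trans hK2 _; rewrite (mulrA d) (mulrC d) hd1 mul1r.
  nra.
have step : forall t s, vnorm2 (a t.+1 - a s.+1) <=
    vnorm2 (a t.+1 - f (a t)) + gamma * vnorm2 (a t - a s) + vnorm2 (a s.+1 - f (a s)).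
  move=> t s; rewrite (zid3 _ _ (f (a t)) (f (a s))).
  apply: le_trans (vn_add3 _ _ _) _.
  rewrite lerD2r lerD2l; exact: contr.
have cauchy : forall eps, 0 < eps -> exists T, forall t s, (T <= t)%N -> (T <= s)%N ->
    vnorm2 (a t - a s) <= eps.
  move=> eps e0.
  pose eta' := eps / 2.
  pose eta := eta' * (1 - gamma) / 2.
  have eta0 : 0 < eta by rewrite /eta /eta' !divr_gt0 ?mulr_gt0 // subr_gt0.
  have heta : 2 * eta + gamma * eta' = eta' by rewrite /eta; field.
  have [T0 hT0] := err_small eta eta0.
  have [k hk] : exists k, gamma ^+ k * sn <= eps / 2.
    have gabs : `|gamma| < 1 by rewrite ger0_norm.
    have /cvgrPdist_le h := cvg_expr gabs.
    have e2 : 0 < eps / 2 / (sn + 1) by rewrite !divr_gt0 // ltr_pwDr.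
    have [N _ HN] := h _ e2.
    exists N; have := HN N (leqnn N); rewrite sub0r normrN ger0_norm ?exprn_ge0 //.
    rewrite ler_pdivlMr ?ltr_pwDr // => hN.
    have : 0 <= gamma ^+ N by exact: exprn_ge0.
    nra.
  have claim : forall j t s, (T0 <= t)%N -> (T0 <= s)%N ->
      vnorm2 (a (t + j)%N - a (s + j)%N) <= gamma ^+ j * sn + eta'.
    elim=> [|j IH] t s ht hs.
      rewrite !addn0 expr0 mul1r; have := abnd t s; rewrite /eta'; lra.
    rewrite !addnS; apply: le_trans (step _ _) _.
    have h1 := hT0 (t + j)%N (leq_trans ht (leq_addr _ _)).
    have h2 := hT0 (s + j)%N (leq_trans hs (leq_addr _ _)).
    have h3 : gamma * vnorm2 (a (t + j)%N - a (s + j)%N) <= gamma * (gamma ^+ j * sn + eta').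
      exact: ler_wpM2l (IH t s ht hs).
    rewrite exprS; lra.
  exists (T0 + k)%N => t s ht hs.
  have htk : (k <= t)%N by apply: leq_trans (leq_addl T0 k) ht.
  have hsk : (k <= s)%N by apply: leq_trans (leq_addl T0 k) hs.
  have h1 : (T0 <= t - k)%N by rewrite leq_subRL // addnC.
  have h2 : (T0 <= s - k)%N by rewrite leq_subRL // addnC.
  have := claim k (t - k)%N (s - k)%N h1 h2.
  rewrite !subnK // /eta' => h; lra.
have ecvg : forall i : 'I_n, cvg ((fun t => a t i 0) @ \oo).
  move=> i; apply/cauchy_cvgP; apply: cauchy_exP => eps e0.
  have e2 : 0 < eps / 2 by rewrite divr_gt0.
  have [T hT] := cauchy _ e2.
  exists (a T i 0); exists T => // t /= hTt.
  rewrite -ball_normE /ball_ /=.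
  have := entry_le (a T - a t) i; rewrite !mxE.
  have := hT T t (leqnn T) hTt; lra.
have [astar hastar] : exists astar : 'cV[R]_n,
    forall i, astar i 0 = lim ((fun t => a t i 0) @ \oo).
  by exists (\col_i lim ((fun t => a t i 0) @ \oo)) => i; rewrite mxE.
have acvg : a @ \oo --> astar.
  apply/cvgrPdist_le => eps e0.
  have : \forall t \near \oo, forall i, `|astar i 0 - a t i 0| <= eps.
    apply: filter_forall => i.
    move: (ecvg i) => /cvgrPdist_le /(_ eps e0).
    by apply: filterS => t; rewrite hastar.
  apply: filterS => t Ht.
  rewrite /Num.Def.normr /= mx_normrE.
  apply: bigmax_le => [|[i j] _]; first exact: ltW.
  by rewrite /= (ord1 j) !mxE.
exists astar; split => //.
have hz : vnorm2 (astar - f astar) = 0.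
  apply/eqP; rewrite eq_le vn_ge0 andbT.
  case: (lerP (vnorm2 (astar - f astar)) 0) => // hpos.
  set X := vnorm2 (astar - f astar) in hpos *.
  have e3 : 0 < X / 4 by rewrite divr_gt0.
  have [N1 hN1] := cvg_vn acvg e3.
  have [N2 hN2] := err_small _ e3.
  pose t := (N1 + N2)%N.
  have h1 := hN1 t.+1 (leq_trans (leq_addr N2 N1) (leqnSn _)).
  have h2 := hN1 t (leq_addr N2 N1).
  have h3 := hN2 t (leq_addl N1 N2).
  have h4 := vn_add3' (- (a t.+1 - astar)) (a t.+1 - f (a t)) (f (a t) - f astar).
  rewrite -zid4 vn_opp -/X in h4.
  have h5 := contr (a t) astar.
  have h6 : gamma * vnorm2 (a t - astar) <= X / 4.
    have y0 := vn_ge0 (a t - astar).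
    have : gamma * vnorm2 (a t - astar) <= 1 * vnorm2 (a t - astar).
      by apply: ler_wpM2r => //; exact: ltW.
    rewrite mul1r => h; exact: le_trans h (h2).
  exfalso; lra.
apply/matrixP => i j; rewrite (ord1 j).
have := entry_le (astar - f astar) i; rewrite hz normr_le0 => /eqP.
rewrite [X in X = 0]mxE [X in _ + X]mxE => /eqP; rewrite subr_eq0 => /eqP ->.
by [].
Qed.
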